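(* Assume the setting and algorithm described in the context. If $0<\alpha\le\frac{\sqrt n}{\sqrt{8m}\,L}$, then for all $k\ge0$, almost surely, $$\mathbb E\big[t^{k+1}\,|\,\mathcal F^k\big]\le 2t^k+3\alpha^2\|\overline{\nabla\mathbf f}(x^k)\|^2+\frac{9}{4mn}\|x^k-Jx^k\|^2 .$$
   Context: Setting. Let $n,m,p\ge1$ be integers and $\mathcal V=\{1,\dots,n\}$. For each $i\in\mathcal V$ and $j\in\{1,\dots,m\}$, $f_{i,j}:\mathbb R^p\to\mathbb R$ is differentiable and $L$-smooth for some $L>0$, i.e. $\|\nabla f_{i,j}(x)-\nabla f_{i,j}(y)\|\le L\|x-y\|$ for all $x,y\in\mathbb R^p$. Let $f_i:=\frac1m\sum_{j=1}^m f_{i,j}$ and $F:=\frac1n\sum_{i=1}^n f_i$, and assume $F^*:=\inf_{x\in\mathbb R^p}F(x)>-\infty$. Let $\underline W=(\underline w_{ir})\in\mathbb R^{n\times n}$ be a nonnegative, primitive, doubly stochastic matrix ($\underline W\mathbf 1_n=\mathbf 1_n$, $\mathbf 1_n^\top\underline W=\mathbf 1_n^\top$), and let $\lambda\in[0,1)$ be its second largest singular value. Any expression with $\lambda$ in a denominator is read as $+\infty$ when $\lambda=0$. Algorithm GT-SAGA with step-size $\alpha>0$: fix a deterministic $\bar x^0\in\mathbb R^p$; for all $i\in\mathcal V$ set $x_i^0=\bar x^0$, $z_{i,j}^0=x_i^0$ for all $j$, $y_i^0=0$, $g_i^{-1}=0$. For $k=0,1,2,\dots$ and every $i\in\mathcal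 V$: draw $\tau_i^k$ uniformly from $\{1,\dots,m\}$; set $g_i^k=\nabla f_{i,\tau_i^k}(x_i^k)-\nabla f_{i,\tau_i^k}(z_{i,\tau_i^k}^k)+\frac1m\sum_{j=1}^m\nabla f_{i,j}(z_{i,j}^k)$; set $y_i^{k+1}=\sum_{r=1}^n\underline w_{ir}(y_r^k+g_r^k-g_r^{k-1})$; set $x_i^{k+1}=\sum_{r=1}^n\underline w_{ir}(x_r^k-\alpha y_r^{k+1})$; draw $s_i^k$ uniformly from $\{1,\dots,m\}$; set $z_{i,j}^{k+1}=x_i^k$ if $j=s_i^k$ and $z_{i,j}^{k+1}=z_{i,j}^k$ otherwise. The family $\{\tau_i^k,s_i^k: i\in\mathcal V,k\ge0\}$ is independent. Notation. $x^k,y^k,g^k\in\mathbb R^{np}$ stack the $x_i^k$, $y_i^k$, $g_i^k$; $\nabla\mathbf f(x^k)\in\mathbb R^{np}$ stacks $\nabla f_i(x_i^k)$, $i=1,\dots,n$; $W=\underline W\otimes I_p$, $J=(\frac1n\mathbf 1_n\mathbf 1_n^\top)\otimes I_p$; $\bar x^k=\frac1n\sum_i x_i^k$, $\bar g^k=\frac1n\sum_i g_i^k$, $\overline{\nabla\mathbf f}(x^k)=\frac1n\sum_i\nabla f_i(x_i^k)$. $\mathcal F^0$ is the trivial $\sigma$-algebra and $\mathcal F^k=\sigma(\{\tau_i^t,s_i^t:i\in\mathcal V,\ t\le k-1\})$ for $k\ge1$. $t^k:=\frac1n\sum_{i=1}^n\frac1m\sum_{j=1}^m\|\bar x^k-z_{i,j}^k\|^2$.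 $\|\nabla\mathbf f(x^0)\|^2:=\sum_{i=1}^n\|\nabla f_i(\bar x^0)\|^2$. Norms are Euclidean (spectral for matrices); vector and matrix inequalities are entrywise. *)

(* Defs.v *)
From mathcomp Require Import all_boot all_order all_algebra.
From mathcomp Require Import all_classical all_reals all_analysis.
Import Order.TTheory GRing.Theory Num.Theory.
Import numFieldNormedType.Exports.
Set Implicit Arguments.
Unset Strict Implicit.
Unset Printing Implicit Defensive.
Local Open Scope ring_scope.

(* Vectors of R^p are row vectors 'rV[R]_p; agent indices {1..n} are 'I_n,
   component indices {1..m} are 'I_m. *)

Definition sqnorm (R : realType) (p : nat) (v : 'rV[R]_p) : R :=
  \sum_(l < p) (v 0 l) ^+ 2.
Definition enorm (R : realType) (p : nat) (v : 'rV[R]_p) : R :=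
  Num.sqrt (sqnorm v).
Definition dotv (R : realType) (p : nat) (u v : 'rV[R]_p) : R :=
  \sum_(l < p) u 0 l * v 0 l.

Definition is_gradient (R : realType) (p : nat) (f : 'rV[R]_p -> R)
  (g : 'rV[R]_p -> 'rV[R]_p) : Prop :=
  forall x, differentiable f x /\ forall v, 'd f x v = dotv (g x) v.

Definition L_smooth (R : realType) (p : nat) (L : R)
  (g : 'rV[R]_p -> 'rV[R]_p) : Prop :=
  forall x y, enorm (g x - g y) <= L * enorm (x - y).

Definition nonneg_mx (R : realType) (n : nat) (W : 'M[R]_n) : Prop :=
  forall i j, 0 <= W i j.
Definition doubly_stochastic (R : realType) (n : nat) (W : 'M[R]_n) : Prop :=
  nonneg_mx W /\ (forall i, \sum_(r < n) W i r = 1)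
             /\ (forall r, \sum_(i < n) W i r = 1).
Definition primitive_mx (R : realType) (n : nat) (W : 'M[R]_n) : Prop :=
  exists k : nat, (0 < k)%N /\ forall i j, 0 < (W ^+ k) i j.

(* Random draws at one iteration: for every agent i, the pair (tau_i^k, s_i^k). *)
Definition draws (n m : nat) := {ffun 'I_n -> 'I_m * 'I_m}.

(* State of GT-SAGA at iteration k:
   x_i^k, y_i^k, g_i^{k-1}, z_{i,j}^k. *)
Record gts_state (R : realType) (n m p : nat) := GTS {
  st_x : 'I_n -> 'rV[R]_p;
  st_y : 'I_n -> 'rV[R]_p;
  st_gprev : 'I_n -> 'rV[R]_p;
  st_z : 'I_n -> 'I_m -> 'rV[R]_p }.

Section GTSAGA.
Variables (R : realType) (n m p : nat).
Variables (W : 'M[R]_n) (alpha : R) (gf : 'I_n -> 'I_m -> 'rV[R]_p -> 'rV[R]_p).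

Definition gts_init (x0 : 'rV[R]_p) : gts_state R n m p :=
  GTS (fun _ => x0) (fun _ => 0) (fun _ => 0) (fun _ _ => x0).

Definition gts_g (st : gts_state R n m p) (d : draws n m) (i : 'I_n) : 'rV[R]_p :=
  let tau := (d i).1 in
  gf i tau (st_x st i) - gf i tau (st_z st i tau)
  + (m%:R)^-1 *: \sum_(j < m) gf i j (st_z st i j).

Definition gts_step (st : gts_state R n m p) (d : draws n m) : gts_state R n m p :=
  let g := gts_g st d in
  let y' := fun i => \sum_(r < n) W i r *: (st_y st r + g r - st_gprev st r) in
  let x' := fun i => \sum_(r < n) W i r *: (st_x st r - alpha *: y' r) in
  let z' := fun i j => if j == (d i).2 then st_x st i else st_z st i j in
  GTS x' y' g z'.

(* state at iteration k along the sequence of draws omega (omega k = draws at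
   iteration k); it depends only on omega 0, ..., omega (k-1) *)
Fixpoint gts_iter (x0 : 'rV[R]_p) (omega : nat -> draws n m) (k : nat)
  : gts_state R n m p :=
  match k with
  | 0 => gts_init x0
  | k'.+1 => gts_step (gts_iter x0 omega k') (omega k')
  end.
End GTSAGA.

Section Quantities.
Variables (R : realType) (n m p : nat).

Definition avg_x (x : 'I_n -> 'rV[R]_p) : 'rV[R]_p :=
  (n%:R)^-1 *: \sum_(i < n) x i.

Definition t_quant (st : gts_state R n m p) : R :=
  (n%:R)^-1 * \sum_(i < n) ((m%:R)^-1 * \sum_(j < m) sqnorm (avg_x (st_x st) - st_z st i j)).

Definition consensus_err (x : 'I_n -> 'rV[R]_p) : R :=
  \sum_(i < n) sqnorm (x i - avg_x x).

Definition avg_grad (gf : 'I_n -> 'I_m -> 'rV[R]_p -> 'rV[R]_p)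
  (x : 'I_n -> 'rV[R]_p) : 'rV[R]_p :=
  (n%:R)^-1 *: \sum_(i < n) ((m%:R)^-1 *: \sum_(j < m) gf i j (x i)).

(* Conditional expectation given F^k of a random variable X that is a function
   of the draws of iterations 0..k: since the draws of iteration k are uniform
   on draws n m and independent of F^k, E[X | F^k](omega) is the average of X
   over all possible draws at iteration k, keeping omega 0..k-1 fixed. *)
Definition replace_draw (omega : nat -> draws n m) (k : nat) (d : draws n m) :
  nat -> draws n m := fun t => if t == k then d else omega t.

Definition cond_exp_Fk (X : (nat -> draws n m) -> R) (k : nat)
  (omega : nat -> draws n m) : R :=
  (#|{: draws n m}|%:R)^-1 * \sum_(d : draws n m) X (replace_draw omega k d).
End Quantities.

(* Main.v *)
Require Import Defs.
From mathcomp Require Import all_boot all_order all_algebra.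
From mathcomp Require Import all_classical all_reals all_analysis.
From mathcomp Require Import ring lra.
Import Order.TTheory GRing.Theory Num.Theory.
Import numFieldNormedType.Exports.
Local Open Scope ring_scope.
Set Implicit Arguments.
Unset Strict Implicit.

Lemma sum_ind (R : realFieldType) m (j : 'I_m) (A B : R) :
  \sum_(s < m) (if j == s then A else B) = A - B + m%:R * B.
Proof.
rewrite (eq_bigr (fun s => B + (if j == s then A - B else 0))); last first.
  by move=> s _; case: ifP => _; rewrite ?addr0 // addrC subrK.
rewrite big_split /= sumr_const card_ord -big_mkcond /=.
rewrite (big_pred1 j); last by move=> s; exact: eq_sym.
by rewrite mulr_natl addrC.
Qed.

Lemma final_arith (R : realFieldType) (t C sg ES A a L2 im iN : R) :
  0 <= t -> 0 <= C -> 0 <= a -> 0 <= iN -> 0 <= im -> 0 <= L2 ->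
  ES <= sg + iN * A -> A <= 2 * L2 * (iN * C) + 2 * L2 * t ->
  a * L2 * iN <= im / 8 ->
  3/2 * (im * (iN * C) + (1 - im) * t) + 3 * a * ES
  <= 2 * t + 3 * a * sg + 9/4 * im * iN * C.
Proof.
move=> t0 C0 a0 n0 m0 L20 hE hA hq.
have h1 : a * ES <= a * (sg + iN * A) by apply: ler_wpM2l.
have h2 : a * iN * A <= a * iN * (2 * L2 * (iN * C) + 2 * L2 * t)
  by apply: ler_wpM2l => //; apply: mulr_ge0.
have h3 : a * L2 * iN * (iN * C) <= im / 8 * (iN * C)
  by apply: ler_wpM2r => //; apply: mulr_ge0.
have h4 : a * L2 * iN * t <= im / 8 * t by apply: ler_wpM2r.
have h5 : 0 <= im * t by apply: mulr_ge0.
have e1 : a * (sg + iN * A) = a * sg + a * iN * A by ring.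
have e2 : a * iN * (2 * L2 * (iN * C) + 2 * L2 * t)
   = 2 * (a * L2 * iN * (iN * C)) + 2 * (a * L2 * iN * t) by ring.
have e3 : im / 8 * (iN * C) = 1/8 * (im * (iN * C)) by ring.
have e4 : 9/4 * im * iN * C = 9/4 * (im * (iN * C)) by ring.
rewrite e1 e2 e4 in h1 h2 *; rewrite e3 in h3.
have e5 : 3/2 * (im * (iN * C) + (1 - im) * t) + 3 * a * ES
   = 3/2 * (im * (iN * C)) + 3/2 * t - 3/2 * (im * t) + 3 * (a * ES) by ring.
have e6 : im / 8 * t = 1/8 * (im * t) by ring.
rewrite e6 in h4; rewrite e5.
have e7 : 3 * a * sg = 3 * (a * sg) by ring.
rewrite e7.
lra.
Qed.

Section Vec.
Variables (R : realType) (p : nat).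
Implicit Types a b c v : 'rV[R]_p.

Lemma sqnorm_ge0 v : 0 <= sqnorm v.
Proof. by apply: sumr_ge0 => l _; rewrite sqr_ge0. Qed.

Lemma sqnormB_sym a b : sqnorm (a - b) = sqnorm (b - a).
Proof. by apply: eq_bigr => l _; rewrite !mxE -sqrrN opprB. Qed.

Lemma sqnorm_young a b : sqnorm (a - b) <= 3/2 * sqnorm a + 3 * sqnorm b.
Proof.
rewrite /sqnorm !mulr_sumr -big_split /=; apply: ler_sum => l _.
rewrite !mxE; have := sqr_ge0 (a 0 l + 2 * b 0 l); nra.
Qed.

Lemma sqnorm_tri a b c : sqnorm (a - c) <= 2 * sqnorm (a - b) + 2 * sqnorm (b - c).
Proof.
rewrite /sqnorm !mulr_sumr -big_split /=; apply: ler_sum => l _.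
rewrite !mxE; have := sqr_ge0 (a 0 l - 2 * b 0 l + c 0 l); nra.
Qed.

Lemma smooth_sq (L : R) (g : 'rV[R]_p -> 'rV[R]_p) x y :
  0 < L -> L_smooth L g -> sqnorm (g x - g y) <= L ^+ 2 * sqnorm (x - y).
Proof.
move=> L0 /(_ x y); rewrite /enorm => H.
have h1 := sqnorm_ge0 (g x - g y); have h2 := sqnorm_ge0 (x - y).
rewrite -(sqr_sqrtr h1) -(sqr_sqrtr h2) -exprMn.
apply: lerXn2r => //; rewrite ?nnegrE ?sqrtr_ge0 ?mulr_ge0 ?sqrtr_ge0 ?ltW //.
Qed.
Lemma sqnormZ (k : R) v : sqnorm (k *: v) = k ^+ 2 * sqnorm v.
Proof. by rewrite /sqnorm mulr_sumr; apply: eq_bigr => l _; rewrite !mxE exprMn. Qed.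
End Vec.

Section Exp.
Variables (R : realType) (n m : nat).
Hypothesis m0 : (0 < m)%N.

Definition avgU (F : 'I_m * 'I_m -> R) : R :=
  (#|{: 'I_m * 'I_m}|%:R)^-1 * \sum_u F u.
Definition Ed (X : draws n m -> R) : R :=
  (#|{: draws n m}|%:R)^-1 * \sum_(d : draws n m) X d.

Lemma cardU : #|{: 'I_m * 'I_m}|%:R = (m%:R * m%:R : R).
Proof. by rewrite card_prod card_ord natrM. Qed.

Lemma cardD : #|{: draws n m}|%:R = ((m%:R * m%:R) ^+ n : R).
Proof. by rewrite /draws card_ffun card_prod !card_ord natrX natrM. Qed.

Lemma mR0 : (m%:R : R) != 0.
Proof. by rewrite pnatr_eq0 -lt0n. Qed.

Lemma Ed_prod (H : 'I_n -> 'I_m * 'I_m -> R) :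
  Ed (fun d => \prod_i H i (d i)) = \prod_i avgU (H i).
Proof.
rewrite /Ed /avgU cardD cardU big_split /= prodr_const card_ord exprVn.
congr (_ * _).
by rewrite bigA_distr_bigA.
Qed.

Lemma avgU1 : avgU (fun _ => 1) = 1.
Proof.
rewrite /avgU sumr_const mulVf // cardU.
by rewrite mulf_neq0 // mR0.
Qed.

Lemma Ed1 i (F : 'I_m * 'I_m -> R) : Ed (fun d => F (d i)) = avgU F.
Proof.
pose H := fun j u => if j == i then F u else 1.
have -> : (fun d : draws n m => F (d i)) = (fun d => \prod_j H j (d j)).
  apply: funext => d; rewrite (bigD1 i) //= big1 ?mulr1 /H ?eqxx //.
  by move=> j /negbTE ->.
rewrite Ed_prod (bigD1 i) //= big1 ?mulr1 /H ?eqxx //.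
by move=> j /negbTE ->; exact: avgU1.
Qed.

Lemma Ed2 i i' (F G : 'I_m * 'I_m -> R) : i != i' ->
  Ed (fun d => F (d i) * G (d i')) = avgU F * avgU G.
Proof.
move=> ii'.
pose H := fun j u => if j == i then F u else if j == i' then G u else 1.
have -> : (fun d : draws n m => F (d i) * G (d i')) = (fun d => \prod_j H j (d j)).
  apply: funext => d; rewrite (bigD1 i) //= (bigD1 i') 1?eq_sym //= big1 ?mulr1 /H ?eqxx.
    by rewrite eq_sym (negbTE ii').
  by move=> j /andP[/negbTE -> /negbTE ->].
rewrite Ed_prod (bigD1 i) //= (bigD1 i') 1?eq_sym //= big1 ?mulr1 /H ?eqxx.
  by rewrite eq_sym (negbTE ii').
by move=> j /andP[/negbTE -> /negbTE ->]; exact: avgU1.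
Qed.

Lemma Ed_const c : Ed (fun _ => c) = c.
Proof.
rewrite /Ed sumr_const -[c *+ _]mulr_natr mulrCA mulVf ?mulr1 // cardD.
by rewrite expf_neq0 // mulf_neq0 // mR0.
Qed.

Lemma Ed_sum (I : finType) (X : I -> draws n m -> R) :
  Ed (fun d => \sum_i X i d) = \sum_i Ed (X i).
Proof. by rewrite /Ed exchange_big mulr_sumr. Qed.

Lemma EdD X Y : Ed (fun d => X d + Y d) = Ed X + Ed Y.
Proof. by rewrite /Ed big_split mulrDr. Qed.

Lemma EdZ c X : Ed (fun d => c * X d) = c * Ed X.
Proof. by rewrite /Ed -mulr_sumr mulrCA. Qed.

Lemma Ed_le X Y : (forall d, X d <= Y d) -> Ed X <= Ed Y.
Proof.
move=> h; rewrite /Ed ler_pM2l ?invr_gt0 ?cardD ?exprn_gt0 ?mulr_gt0 ?ltr0n //.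
exact: ler_sum.
Qed.

Lemma avgU_fst (h : 'I_m -> R) : avgU (fun u => h u.1) = (m%:R)^-1 * \sum_j h j.
Proof.
rewrite /avgU cardU -(pair_bigA _ (fun a b => h a)) /=.
under eq_bigr do rewrite sumr_const card_ord -mulr_natr.
rewrite -mulr_suml; field; exact: mR0.
Qed.

Lemma avgU_snd (h : 'I_m -> R) : avgU (fun u => h u.2) = (m%:R)^-1 * \sum_j h j.
Proof.
rewrite /avgU cardU -(pair_bigA _ (fun a b => h b)) /= sumr_const card_ord.
by rewrite -mulr_natr; field; exact: mR0.
Qed.

Lemma Ed_sq (c : R) (e : 'I_n -> 'I_m * 'I_m -> R) :
  (forall i, avgU (e i) = 0) ->
  Ed (fun d => (c + (n%:R)^-1 * \sum_i e i (d i)) ^+ 2)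
  = c ^+ 2 + ((n%:R)^-1) ^+ 2 * \sum_i avgU (fun u => e i u * e i u).
Proof.
move=> E0.
have ex : forall d : draws n m, (c + (n%:R)^-1 * \sum_i e i (d i)) ^+ 2 =
   c ^+ 2 + (2 * c * (n%:R)^-1) * \sum_i e i (d i)
   + ((n%:R)^-1) ^+ 2 * \sum_i \sum_j (e i (d i) * e j (d j)).
  move=> d; have -> : \sum_i \sum_j (e i (d i) * e j (d j)) = (\sum_i e i (d i)) ^+ 2.
    by rewrite expr2 mulr_suml; apply: eq_bigr => i _; rewrite mulr_sumr.
  ring.
rewrite (funext ex).
rewrite EdD EdD Ed_const !EdZ !Ed_sum.
rewrite (eq_bigr (fun i => 0)); last by move=> i _; rewrite Ed1 E0.
rewrite big1 // mulr0 addr0; congr (_ + _ * _).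
apply: eq_bigr => i _; rewrite Ed_sum (bigD1 i) //= big1 ?addr0.
  exact: (Ed1 i (fun u => e i u * e i u)).
by move=> j ji; rewrite Ed2 1?eq_sym // E0 mul0r.
Qed.

Lemma var_le (a : 'I_m -> R) :
  (m%:R)^-1 * \sum_t (a t - (m%:R)^-1 * \sum_j a j) ^+ 2
  <= (m%:R)^-1 * \sum_t a t ^+ 2.
Proof.
set mu := (m%:R)^-1 * \sum_j a j.
have -> : \sum_t (a t - mu) ^+ 2 = \sum_t a t ^+ 2 - mu * (2 * \sum_t a t) + m%:R * mu ^+ 2.
  rewrite (eq_bigr (fun t => a t ^+ 2 - mu * (2 * a t) + mu ^+ 2)); last first.
    by move=> t _; ring.
  rewrite big_split /= sumrB sumr_const card_ord -mulr_natl; congr (_ - _ + _).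
  by rewrite mulr_sumr mulr_sumr.
  by rewrite mulr_natl.
have hS : \sum_t a t = m%:R * mu by rewrite /mu mulrA mulfV ?mul1r // mR0.
rewrite hS; rewrite ler_pM2l ?invr_gt0 ?ltr0n //.
have : 0 <= m%:R * mu ^+ 2 by rewrite mulr_ge0 ?ler0n ?sqr_ge0.
lra.
Qed.
End Exp.

Section Dyn.
Variables (R : realType) (n m p : nat).
Variables (W : 'M[R]_n) (alpha : R) (gf : 'I_n -> 'I_m -> 'rV[R]_p -> 'rV[R]_p).
Hypothesis Wcol : forall r, \sum_(i < n) W i r = 1.

Lemma iter_dep x0 om1 om2 k : (forall t, (t < k)%N -> om1 t = om2 t) ->
  gts_iter W alpha gf x0 om1 k = gts_iter W alpha gf x0 om2 k.
Proof.
elim: k => [//|k IH] H /=.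
by rewrite IH ?H // => t tk; apply: H; apply: ltnW.
Qed.

Lemma avg_mix (v : 'I_n -> 'rV[R]_p) :
  avg_x (fun i => \sum_(r < n) W i r *: v r) = avg_x v.
Proof.
rewrite /avg_x exchange_big; congr (_ *: _); apply: eq_bigr => r _.
by rewrite -scaler_suml Wcol scale1r.
Qed.

Lemma avgD (u v : 'I_n -> 'rV[R]_p) : avg_x (fun i => u i + v i) = avg_x u + avg_x v.
Proof. by rewrite /avg_x big_split scalerDr. Qed.
Lemma avgB (u v : 'I_n -> 'rV[R]_p) : avg_x (fun i => u i - v i) = avg_x u - avg_x v.
Proof. by rewrite /avg_x sumrB scalerBr. Qed.
Lemma avgZ c (u : 'I_n -> 'rV[R]_p) : avg_x (fun i => c *: u i) = c *: avg_x u.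
Proof. by rewrite /avg_x -scaler_sumr scalerA mulrC -scalerA. Qed.

Lemma inv_y x0 om k :
  avg_x (st_y (gts_iter W alpha gf x0 om k)) = avg_x (st_gprev (gts_iter W alpha gf x0 om k)).
Proof.
elim: k => [//|k IH] /=.
rewrite avg_mix avgB avgD IH addrAC subrr add0r. by [].
Qed.

Lemma avg_step (st : gts_state R n m p) d :
  avg_x (st_y st) = avg_x (st_gprev st) ->
  avg_x (st_x (gts_step W alpha gf st d)) = avg_x (st_x st) - alpha *: avg_x (gts_g gf st d).
Proof.
move=> H /=.
by rewrite avg_mix avgB avgZ avg_mix avgB avgD H addrAC subrr add0r.
Qed.
End Dyn.

Section Avg2.
Variables (R : realType) (n m : nat).
Hypotheses (n0 : (0 < n)%N) (m0 : (0 < m)%N).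
Definition avg2 (F : 'I_n -> 'I_m -> R) : R :=
  (n%:R)^-1 * \sum_i ((m%:R)^-1 * \sum_j F i j).

Lemma avg2_le F G : (forall i j, F i j <= G i j) -> avg2 F <= avg2 G.
Proof.
move=> h; rewrite /avg2 ler_pM2l ?invr_gt0 ?ltr0n //; apply: ler_sum => i _.
by rewrite ler_pM2l ?invr_gt0 ?ltr0n //; apply: ler_sum => j _.
Qed.

Lemma avg2_lin a b F G :
  avg2 (fun i j => a * F i j + b * G i j) = a * avg2 F + b * avg2 G.
Proof.
rewrite /avg2 mulrCA [b * _]mulrCA -mulrDr; congr (_ * _).
rewrite !mulr_sumr -big_split; apply: eq_bigr => i _ /=.
rewrite big_split /= -!mulr_sumr; ring.
Qed.

Lemma avg2_const c : avg2 (fun _ _ => c) = c.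
Proof.
rewrite /avg2 (eq_bigr (fun _ => c)); last first.
  by move=> i _; rewrite sumr_const card_ord -[c *+ _]mulr_natl mulrA mulVf ?mul1r ?pnatr_eq0 -?lt0n.
by rewrite sumr_const card_ord -[c *+ _]mulr_natl mulrA mulVf ?mul1r ?pnatr_eq0 -?lt0n.
Qed.

Lemma avg2_row (A : 'I_n -> R) : avg2 (fun i _ => A i) = (n%:R)^-1 * \sum_i A i.
Proof.
rewrite /avg2; congr (_ * _); apply: eq_bigr => i _.
by rewrite sumr_const card_ord -[A i *+ _]mulr_natl mulrA mulVf ?mul1r ?pnatr_eq0 -?lt0n.
Qed.

Lemma Ed_avg2 (F : draws n m -> 'I_n -> 'I_m -> R) :
  Ed (fun d => avg2 (F d)) = avg2 (fun i j => Ed (fun d => F d i j)).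
Proof.
rewrite /avg2 EdZ Ed_sum; congr (_ * _); apply: eq_bigr => i _.
by rewrite EdZ Ed_sum.
Qed.
End Avg2.

Section Main.
Variables (R : realType) (n m p : nat) (W : 'M[R]_n) (alpha L : R).
Variable (gf : 'I_n -> 'I_m -> 'rV[R]_p -> 'rV[R]_p).
Hypotheses (n0 : (0 < n)%N) (m0 : (0 < m)%N) (L0 : 0 < L).
Hypothesis Wcol : forall r, \sum_(i < n) W i r = 1.
Hypothesis smooth : forall i j, L_smooth L (gf i j).
Variable st : gts_state R n m p.
Hypothesis inv : avg_x (st_y st) = avg_x (st_gprev st).

Let X := st_x st.
Let Z := st_z st.
Let xb := avg_x X.

Lemma tq_avg2 (s : gts_state R n m p) :
  t_quant s = avg2 (fun i j => sqnorm (avg_x (st_x s) - st_z s i j)).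
Proof. by []. Qed.

Lemma P1 d : t_quant (gts_step W alpha gf st d) <=
  3/2 * avg2 (fun i j => sqnorm (xb - st_z (gts_step W alpha gf st d) i j))
  + 3 * alpha ^+ 2 * sqnorm (avg_x (gts_g gf st d)).
Proof.
rewrite tq_avg2 (avg_step _ _ Wcol) //.
apply: (@le_trans _ _ (avg2 (fun i j =>
   3/2 * sqnorm (xb - st_z (gts_step W alpha gf st d) i j)
   + 3 * (alpha ^+ 2 * sqnorm (avg_x (gts_g gf st d)))))).
  apply: avg2_le => // i j; rewrite addrAC -sqnormZ; exact: sqnorm_young.
by rewrite avg2_lin // avg2_const // mulrA.
Qed.

Lemma P2 : Ed (fun d => avg2 (fun i j => sqnorm (xb - st_z (gts_step W alpha gf st d) i j)))
  = (m%:R)^-1 * ((n%:R)^-1 * consensus_err X) + (1 - (m%:R)^-1) * t_quant st.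
Proof.
rewrite Ed_avg2 //.
have per : forall i j, Ed (fun d => sqnorm (xb - st_z (gts_step W alpha gf st d) i j))
   = (m%:R)^-1 * sqnorm (xb - X i) + (1 - (m%:R)^-1) * sqnorm (xb - Z i j).
  move=> i j.
  transitivity (avgU (fun u : 'I_m * 'I_m => sqnorm (xb - if j == u.2 then X i else Z i j))).
    exact: (Ed1 m0 i (fun u : 'I_m * 'I_m => sqnorm (xb - if j == u.2 then X i else Z i j))).
  rewrite (avgU_snd m0 (fun s => sqnorm (xb - if j == s then X i else Z i j))).
  rewrite (eq_bigr (fun s => if j == s then sqnorm (xb - X i) else sqnorm (xb - Z i j))); last first.
    by move=> s _; case: ifP.
  rewrite sum_ind; field; exact: mR0.
have -> : (fun i j => Ed (fun d => sqnorm (xb - st_z (gts_step W alpha gf st d) i j)))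
  = (fun i j => (m%:R)^-1 * sqnorm (xb - X i) + (1 - (m%:R)^-1) * sqnorm (xb - Z i j)).
  by apply: funext => i; apply: funext => j; exact: per.
rewrite avg2_lin // avg2_row // tq_avg2; congr (_ * (_ * _) + _).
by rewrite /consensus_err; apply: eq_bigr => i _; exact: sqnormB_sym.
Qed.

Lemma P3 : Ed (fun d => sqnorm (avg_x (gts_g gf st d)))
  <= sqnorm (avg_grad gf X) + (n%:R)^-1 * avg2 (fun i j => L ^+ 2 * sqnorm (X i - Z i j)).
Proof.
pose a := fun i l (t : 'I_m) => (gf i t (X i) - gf i t (Z i t)) 0 l.
pose mu := fun i l => (m%:R)^-1 * \sum_j a i l j.
pose e := fun l i (u : 'I_m * 'I_m) => a i l u.1 - mu i l.
pose c := fun l => (avg_grad gf X) 0 l.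
have HG : forall d l, (avg_x (gts_g gf st d)) 0 l = c l + (n%:R)^-1 * \sum_i e l i (d i).
  move=> d l; rewrite /c /e /mu /a /avg_x /avg_grad /gts_g !mxE !summxE -mulrDr -big_split /=.
  congr (_ * _); apply: eq_bigr => i _; rewrite !mxE !summxE.
  have -> : \sum_(j < m) (gf i j (X i) - gf i j (Z i j)) 0 l
     = \sum_(j < m) gf i j (X i) 0 l - \sum_(j < m) gf i j (Z i j) 0 l.
    by rewrite -sumrB; apply: eq_bigr => j _; rewrite !mxE.
  rewrite /X /Z; ring.
have E0 : forall l i, avgU (e l i) = 0.
  move=> l i; rewrite /e (avgU_fst m0 (fun t => a i l t - mu i l)) sumrB sumr_const card_ord /mu.
  rewrite -[_ *+ m]mulr_natl; field; exact: mR0.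
rewrite /sqnorm Ed_sum.
have step : forall l, Ed (fun d => avg_x (gts_g gf st d) 0 l ^+ 2)
   = c l ^+ 2 + ((n%:R)^-1) ^+ 2 * \sum_i avgU (fun u => e l i u * e l i u).
  move=> l; rewrite (funext (fun d => congr1 (fun x => x ^+ 2) (HG d l))).
  by rewrite Ed_sq.

rewrite (eq_bigr _ (fun l _ => step l)) big_split /=.
apply: lerD; first exact: lexx.
rewrite -mulr_sumr exchange_big /avg2 mulrA -expr2.
apply: ler_wpM2l; first by rewrite sqr_ge0.
apply: ler_sum => i _.
apply: (@le_trans _ _ (\sum_l ((m%:R)^-1 * \sum_t a i l t ^+ 2))).
  apply: ler_sum => l _.
  rewrite /e (avgU_fst m0 (fun t => (a i l t - mu i l) * (a i l t - mu i l))).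
  under eq_bigr do rewrite -expr2.
  exact: var_le.
rewrite -mulr_sumr exchange_big /=.
apply: ler_wpM2l; first by rewrite invr_ge0 ler0n.
apply: ler_sum => t _; exact: smooth_sq.
Qed.

Lemma P4 : avg2 (fun i j => L ^+ 2 * sqnorm (X i - Z i j))
  <= 2 * L ^+ 2 * ((n%:R)^-1 * consensus_err X) + 2 * L ^+ 2 * t_quant st.
Proof.
apply: (@le_trans _ _ (avg2 (fun i j => (2 * L ^+ 2) * sqnorm (X i - xb)
                                        + (2 * L ^+ 2) * sqnorm (xb - Z i j)))).
  apply: avg2_le => // i j.
  have h := ler_wpM2l (sqr_ge0 L) (sqnorm_tri (X i) xb (Z i j)).
  apply: (le_trans h); rewrite le_eqVlt; apply/orP; left; apply/eqP; ring.
by rewrite avg2_lin // avg2_row // tq_avg2.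
Qed.

Lemma main_step : alpha ^+ 2 * L ^+ 2 <= n%:R / (8 * m%:R) ->
  Ed (fun d => t_quant (gts_step W alpha gf st d))
  <= 2 * t_quant st + 3 * alpha ^+ 2 * sqnorm (avg_grad gf X)
     + 9 / (4 * m%:R * n%:R) * consensus_err X.
Proof.
move=> hq.
apply: (le_trans (Ed_le m0 (Y := fun d => 3/2 * avg2 (fun i j => sqnorm (xb - st_z (gts_step W alpha gf st d) i j))
  + 3 * alpha ^+ 2 * sqnorm (avg_x (gts_g gf st d))) P1)).
rewrite EdD (EdZ (3/2)) (EdZ (3 * alpha ^+ 2)) P2.
have t0 : 0 <= t_quant st.
  by rewrite tq_avg2 -(avg2_const n0 m0 0); apply: avg2_le => // i j; exact: sqnorm_ge0.
have C0 : 0 <= consensus_err X by apply: sumr_ge0 => i _; exact: sqnorm_ge0.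
have nR0 : (n%:R : R) != 0 by rewrite pnatr_eq0 -lt0n.
have mR0' : (m%:R : R) != 0 by rewrite pnatr_eq0 -lt0n.
have hq' : alpha ^+ 2 * L ^+ 2 * (n%:R)^-1 <= (m%:R)^-1 / 8.
  apply: (le_trans (ler_wpM2r _ hq)); first by rewrite invr_ge0 ler0n.
  by rewrite le_eqVlt; apply/orP; left; apply/eqP; field; rewrite mR0' nR0.
have := final_arith t0 C0 (sqr_ge0 alpha) _ _ (sqr_ge0 L) P3 P4 hq'.
have -> : 9 / (4 * m%:R * n%:R) * consensus_err X
   = 9/4 * (m%:R)^-1 * (n%:R)^-1 * consensus_err X.
  by field; rewrite mR0' nR0.
apply; by rewrite invr_ge0 ler0n.
Qed.
End Main.
Theorem corollary2 (R : realType) (n m p : nat)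
  (f : 'I_n -> 'I_m -> 'rV[R]_p -> R)
  (gf : 'I_n -> 'I_m -> 'rV[R]_p -> 'rV[R]_p)
  (L : R) (W : 'M[R]_n) (alpha : R) (x0 : 'rV[R]_p) :
  (0 < n)%N -> (0 < m)%N -> (0 < p)%N ->
  0 < L ->
  (forall i j, is_gradient (f i j) (gf i j)) ->
  (forall i j, L_smooth L (gf i j)) ->
  (exists c : R, forall x : 'rV[R]_p,
      c <= (n%:R)^-1 * \sum_(i < n) ((m%:R)^-1 * \sum_(j < m) f i j x)) ->
  doubly_stochastic W -> primitive_mx W ->
  0 < alpha -> alpha <= Num.sqrt (n%:R) / (Num.sqrt (8 * m%:R) * L) ->
  forall (k : nat) (omega : nat -> draws n m),
    cond_exp_Fk (fun om => t_quant (gts_iter W alpha gf x0 om k.+1)) k omega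
    <= 2 * t_quant (gts_iter W alpha gf x0 omega k)
       + 3 * alpha ^+ 2 * sqnorm (avg_grad gf (st_x (gts_iter W alpha gf x0 omega k)))
       + 9 / (4 * m%:R * n%:R) * consensus_err (st_x (gts_iter W alpha gf x0 omega k)).
Proof.
move=> n0 m0 p0 L0 _ smooth _ [_ [_ cols]] _ a0 ha k omega.
have inv := @inv_y _ _ _ _ W alpha gf cols x0 omega k.
have hq : alpha ^+ 2 * L ^+ 2 <= n%:R / (8 * m%:R).
  have hR : 0 <= Num.sqrt (n%:R) / (Num.sqrt (8 * m%:R) * L).
    exact: le_trans (ltW a0) ha.
  have h2 : alpha ^+ 2 <= (Num.sqrt (n%:R) / (Num.sqrt (8 * m%:R) * L)) ^+ 2.
    by apply: lerXn2r; [rewrite nnegrE; exact: ltW | rewrite nnegrE | exact: ha].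
  rewrite expr_div_n exprMn !sqr_sqrtr ?ler0n ?mulr_ge0 ?ler0n // in h2.
  apply: (le_trans (ler_wpM2r (sqr_ge0 L) h2)).
  have mR0' : (m%:R : R) != 0 by rewrite pnatr_eq0 -lt0n.
  rewrite le_eqVlt; apply/orP; left; apply/eqP; field.
  by rewrite mR0' gt_eqF.
have -> : cond_exp_Fk (fun om => t_quant (gts_iter W alpha gf x0 om k.+1)) k omega
  = Ed (fun d => t_quant (gts_step W alpha gf (gts_iter W alpha gf x0 omega k) d)).
  rewrite /cond_exp_Fk /Ed; congr (_ * _); apply: eq_bigr => d _ /=.
  rewrite /replace_draw eqxx; congr (t_quant (gts_step _ _ _ _ d)).
  apply: iter_dep => t tk; by rewrite (ltn_eqF tk).
exact: (main_step (L := L)).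
Qed.
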